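(* For every $n\ge 6$ there exist two non-isomorphic graphs $G_n,H_n$ on $n$ vertices and a graph $F$ such that, with $\mathcal{F}=\{F\}$, for every number of rounds $T\ge 0$, $$\big\|\overline{\phi^{(T)}_{\mathsf{WL}}}(G_n)-\overline{\phi^{(T)}_{\mathsf{WL}}}(H_n)\big\|=0\quad\text{and}\quad\big\|\overline{\phi^{(T)}_{\mathsf{WL},\mathcal{F}}}(G_n)-\overline{\phi^{(T)}_{\mathsf{WL},\mathcal{F}}}(H_n)\big\|=\sqrt{2}.$$
   Context: Graphs are finite, simple, undirected, unlabeled. $1$-WL: $C^1_0$ constant, $C^1_t(v)=\mathsf{RELABEL}(C^1_{t-1}(v),\{\!\{C^1_{t-1}(u):u\in N(v)\}\!\})$, $\mathsf{RELABEL}$ a fixed injective map shared by all graphs. $1$-WL$_{\mathcal{F}}$: same update with initial colour $C^{1,\mathcal{F}}_0(v)=(\ell_F(v))_{F\in\mathcal{F}}$, $\ell_F(v)=1$ if $v$ belongs to some vertex set $X$ with induced subgraph $G[X]$ isomorphic to $F$, else $0$. For round $t$, $\phi_t(G)$ (resp. $\phi_{\mathcal{F},t}(G)$) is the vector indexed by the colours occurring at round $t$ (in the graphs considered) counting vertices of $G$ of each colour; $\phi^{(T)}_{\mathsf{WL}}(G)=[\phi_0(G),\dots,\phi_T(G)]$, $\phi^{(T)}_{\mathsf{WL},\mathcal{F}}(G)=[\phi_{\mathcal{F},0}(G),\dots,\phi_{\mathcal{F},T}(G)]$; a bar denotes normalisation to unit Euclidean norm; $\|\cdot\|$ is the Euclidean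 norm. *)

(* Defs.v *)
From HB Require Import structures.
From mathcomp Require Import all_boot all_order all_algebra.
From mathcomp Require Import reals.
Set Implicit Arguments. Unset Strict Implicit. Unset Printing Implicit Defensive.
Import Order.TTheory GRing.Theory Num.Theory.

Definition is_graph n (e : rel 'I_n) : Prop :=
  (forall u v, e u v = e v u) /\ (forall v, e v v = false).

Definition isomorphic n (eG eH : rel 'I_n) : Prop :=
  exists f : 'I_n -> 'I_n, bijective f /\ (forall u v, eG u v = eH (f u) (f v)).

(* A round-(t+1) colour is the node
   [colour at t ; multiset of neighbour colours at t], the multiset being
   represented canonically by sorting (w.r.t. the injective pickle order).
   This is an injective RELABEL shared by all graphs. *)
Definition color := GenTree.tree (seq bool).
Definition col_le (a b : color) : bool := (pickle a <= pickle b)%N.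

Fixpoint wl_color n (e : rel 'I_n) (init : 'I_n -> seq bool) (t : nat) (v : 'I_n)
  : color :=
  match t with
  | 0 => GenTree.Leaf (init v)
  | t'.+1 => GenTree.Node 0
      [:: wl_color e init t' v;
          GenTree.Node 0 (sort col_le [seq wl_color e init t' u | u <- enum 'I_n & e v u])]
  end.

Definition no_init n : 'I_n -> seq bool := fun _ => [::].

(* l_F(v) = 1 iff v lies in a vertex set X with G[X] isomorphic to F
   (equivalently: v is in the image of an injective map f from F's vertices
   into G's such that adjacency is preserved and reflected). *)
Definition in_induced_copy k n (eF : rel 'I_k) (e : rel 'I_n) (v : 'I_n) : bool :=
  [exists f : {ffun 'I_k -> 'I_n},
     [&& injectiveb f, v \in codom f &
         [forall a, forall b, eF a b == e (f a) (f b)]]].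

(* 1-WL_F with F = {F}: initial colour is the vector (l_F(v)). *)
Definition sub_init k n (eF : rel 'I_k) (e : rel 'I_n) : 'I_n -> seq bool :=
  fun v => [:: in_induced_copy eF e v].

Definition wl_count n (e : rel 'I_n) init t (c : color) : nat :=
  #|[set v | wl_color e init t v == c]|.

Definition wl_index n (eG eH : rel 'I_n) iG iH t : seq color :=
  undup ([seq wl_color eG iG t v | v <- enum 'I_n] ++
         [seq wl_color eH iH t v | v <- enum 'I_n]).

Definition wl_sqnorm (R : realType) n (eG eH : rel 'I_n) iG iH (e : rel 'I_n) init
  (T : nat) : R :=
  \sum_(t < T.+1) \sum_(c <- wl_index eG eH iG iH t) ((wl_count e init t c)%:R) ^+ 2.

Definition wl_dist (R : realType) n (eG eH : rel 'I_n) iG iH (T : nat) : R :=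
  let nG := Num.sqrt (wl_sqnorm R eG eH iG iH eG iG T) in
  let nH := Num.sqrt (wl_sqnorm R eG eH iG iH eH iH T) in
  Num.sqrt (\sum_(t < T.+1) \sum_(c <- wl_index eG eH iG iH t)
     ((wl_count eG iG t c)%:R / nG - (wl_count eH iH t c)%:R / nH) ^+ 2).

(* Main.v *)
Require Import Defs.
From HB Require Import structures.
From mathcomp Require Import all_boot all_order all_algebra zify.
From mathcomp Require Import reals.
Import Order.TTheory GRing.Theory Num.Theory.

Lemma deg2 m (e : rel 'I_m.+1) : (forall v : 'I_m.+1, exists a b : nat, [/\ a <= m, b <= m, a != b & forall u : 'I_m.+1, e v u = (val u == a) || (val u == b)]) -> forall v, #|[pred u | e v u]| = 2.
Proof.
move=> H v; case: (H v) => a [b [Ha Hb Hab He]].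
rewrite (eq_card (B:=pred2 (inord a : 'I_m.+1) (inord b))); last first.
  by move=> u; rewrite !inE He -!val_eqE /= !inordK.
by rewrite card2 -val_eqE /= !inordK ?Hab.
Qed.

Lemma size_filter_card n (p : pred 'I_n) : size [seq u <- enum 'I_n | p u] = #|[pred u | p u]|.
Proof. rewrite cardE /enum_mem -filter_predI; congr size; apply eq_filter => x /=. by rewrite andbT. Qed.

Fixpoint cc (s : seq bool) t : color := match t with 0 => GenTree.Leaf s | t'.+1 => GenTree.Node 0 [:: cc s t'; GenTree.Node 0 [:: cc s t'; cc s t']] end.

Lemma cc_inj s s' t : cc s t = cc s' t -> s = s'.
Proof. elim: t => [|t IH] /=; first by case. by case=> /IH. Qed.

Lemma wl_const n (e : rel 'I_n) init s : (forall v, init v = s) -> (forall v, #|[pred u | e v u]| = 2) -> forall t v, wl_color e init t v = cc s t.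
Proof.
move=> Hi Hd; elim=> [|t IH] v /=; first by rewrite Hi.
rewrite IH.
set l := map _ _.
have Hl : l = nseq 2 (cc s t).
  have : all (pred1 (cc s t)) l by apply/allP => x /mapP [u _ ->]; rewrite /= IH.
  move/all_pred1P => ->; by rewrite size_map size_filter_card Hd.
have Hs : sort col_le l = nseq 2 (cc s t).
  have P : perm_eq (sort col_le l) l by rewrite perm_sort.
  have : all (pred1 (cc s t)) (sort col_le l) by rewrite (perm_all _ P) Hl all_pred1_nseq.
  by move/all_pred1P => ->; rewrite (perm_size P) Hl.
by rewrite Hs.
Qed.

Lemma wl_count_const n (e : rel 'I_n) init s t (H : forall v, wl_color e init t v = cc s t) c :
  wl_count e init t c = if cc s t == c then n else 0.
Proof.
rewrite /wl_count.
have -> : [set v | wl_color e init t v == c] = [set v | cc s t == c] by apply/setP => v; rewrite !inE H.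
case: (cc s t == c); last by rewrite cards0.
by rewrite cardsT card_ord.
Qed.
Definition cG (m u v : nat) : bool := (u.+1 == v) || (v.+1 == u) || (u == 0) && (v == m) || (v == 0) && (u == m).
Definition cH (m u v : nat) : bool := (u.+1 == v) && (u != 2) || (v.+1 == u) && (v != 2) || (u == 0) && (v == 2) || (v == 0) && (u == 2) || (u == 3) && (v == m) || (v == 3) && (u == m).

Lemma cH_deg m v : 5 <= m -> v <= m -> exists a b, [/\ a <= m, b <= m, a != b & forall u, u <= m -> cH m v u = (u == a) || (u == b)].
Proof.
move=> hm hv.
have [->|h0] := eqVneq v 0; first by exists 1, 2; split; try lia; move=> u hu; rewrite /cH; lia.
have [->|h1] := eqVneq v 1; first by exists 0, 2; split; try lia; move=> u hu; rewrite /cH; lia.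
have [->|h2] := eqVneq v 2; first by exists 0, 1; split; try lia; move=> u hu; rewrite /cH; lia.
have [->|h3] := eqVneq v 3; first by exists 4, m; split; try lia; move=> u hu; rewrite /cH; lia.
have [->|h4] := eqVneq v m; first by exists m.-1, 3; split; try lia; move=> u hu; rewrite /cH; lia.
by exists v.-1, v.+1; split; try lia; move=> u hu; rewrite /cH; lia.
Qed.
Lemma cG_deg m v : 5 <= m -> v <= m -> exists a b, [/\ a <= m, b <= m, a != b & forall u, u <= m -> cG m v u = (u == a) || (u == b)].
Proof.
move=> hm hv.
have [->|h0] := eqVneq v 0; first by exists 1, m; split; try lia; move=> u hu; rewrite /cG; lia.
have [->|h4] := eqVneq v m; first by exists m.-1, 0; split; try lia; move=> u hu; rewrite /cG; lia.
by exists v.-1, v.+1; split; try lia; move=> u hu; rewrite /cG; lia.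
Qed.
Lemma cG_tri m x y z : 5 <= m -> x <= m -> y <= m -> z <= m -> cG m x y -> cG m y z -> cG m x z -> False.
Proof. rewrite /cG; lia. Qed.
Lemma sum2 (R : realType) (r : seq color) a b (F : color -> R) : uniq r -> a \in r -> b \in r -> a != b -> (forall c, c != a -> c != b -> F c = 0%R) -> (\sum_(c <- r) F c = F a + F b)%R.
Proof.
move=> ur ar br ab H0.
rewrite (bigD1_seq a) //= -big_filter (bigD1_seq b) ?filter_uniq ?mem_filter ?br 1?eq_sym ?ab //=.
rewrite big_filter_cond big1 ?addr0 // => c /andP [ca cb]; exact: H0.
Qed.

Definition gG m : rel 'I_m.+1 := fun u v => cG m u v.
Definition gH m : rel 'I_m.+1 := fun u v => cH m u v.
Arguments gG {m}. Arguments gH {m}.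

Lemma gG_graph m : 5 <= m -> is_graph (@gG m).
Proof. move=> hm; split=> [u v|v]; rewrite /gG /cG; lia. Qed.
Lemma gH_graph m : 5 <= m -> is_graph (@gH m).
Proof. move=> hm; split=> [u v|v]; rewrite /gH /cH; lia. Qed.

Lemma gG_deg m : 5 <= m -> forall v : 'I_m.+1, #|[pred u | gG v u]| = 2.
Proof.
move=> hm; apply: deg2 => v; have [a [b [Ha Hb Hab He]]] := cG_deg m (val v) hm (ltn_ord v : val v <= m).
by exists a, b; split => // u; rewrite /gG He // -ltnS.
Qed.
Lemma gH_deg m : 5 <= m -> forall v : 'I_m.+1, #|[pred u | gH v u]| = 2.
Proof.
move=> hm; apply: deg2 => v; have [a [b [Ha Hb Hab He]]] := cH_deg m (val v) hm (ltn_ord v : val v <= m).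
by exists a, b; split => // u; rewrite /gH He // -ltnS.
Qed.

Lemma noniso m : 5 <= m -> ~ isomorphic (@gG m) (@gH m).
Proof.
move=> hm [f [[g fg gf] Hf]].
have E : forall a b, gG (g a) (g b) = gH a b by move=> a b; rewrite Hf !gf.
have := E (inord 0) (inord 1); have := E (inord 1) (inord 2); have := E (inord 0) (inord 2).
rewrite /gH /= !inordK; try lia.
rewrite /gG /= => h1 h2 h3.
apply: (@cG_tri m (g (inord 0)) (g (inord 1)) (g (inord 2))) => //; rewrite -ltnS //.
Qed.
From mathcomp Require Import ring lra.
From Stdlib Require Import FunctionalExtensionality.

Theorem proposition10 (n : nat) : (6 <= n)%N ->
  exists eG eH : rel 'I_n,
    [/\ is_graph eG, is_graph eH, ~ isomorphic eG eH &
      exists (k : nat) (eF : rel 'I_k), is_graph eF /\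
        forall (T : nat) (R : realType),
          wl_dist R eG eH (@no_init n) (@no_init n) T = 0%R /\
          wl_dist R eG eH (sub_init eF eG) (sub_init eF eH) T = Num.sqrt 2%:R].
Proof.
case: n => [|m] //; rewrite ltnS => hm.
exists gG, gH; split; [exact: (gG_graph m hm) | exact: (gH_graph m hm) | exact: (noniso m hm) |].
exists m.+1, gG; split; first exact: (gG_graph m hm).
move=> T R.
have cG0 := @wl_const _ gG (@no_init _) [::] (fun _ => erefl) (gG_deg m hm).
have cH0 := @wl_const _ gH (@no_init _) [::] (fun _ => erefl) (gH_deg m hm).
have EG : forall v : 'I_m.+1, sub_init (@gG m) (@gG m) v = [:: true].
  move=> v; rewrite /sub_init; suff -> : in_induced_copy (@gG m) (@gG m) v = true by []; apply/existsP; exists [ffun x => x].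
  apply/and3P; split.
  - by apply/injectiveP => x y; rewrite !ffunE.
  - by apply/codomP; exists v; rewrite ffunE.
  - by apply/forallP => a; apply/forallP => b; rewrite !ffunE.
have EH : forall v : 'I_m.+1, sub_init (@gG m) (@gH m) v = [:: false].
  move=> v; rewrite /sub_init; suff -> : in_induced_copy (@gG m) (@gH m) v = false by []; apply/negbTE/existsP => [[f /and3P [/injectiveP fi _ /forallP Hf]]].
  apply: (noniso m hm); exists f; split; first exact: injF_bij.
  by move=> u w; apply/eqP; exact: (forallP (Hf u) w).
have cG1 := @wl_const _ gG _ _ EG (gG_deg m hm).
have cH1 := @wl_const _ gH _ _ EH (gH_deg m hm).
split.
- have HH : wl_count (@gH m) (@no_init m.+1) = wl_count (@gG m) (@no_init m.+1).
    apply: functional_extensionality => t; apply: functional_extensionality => c.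
    by rewrite (@wl_count_const _ _ _ _ _ (cH0 t)) (@wl_count_const _ _ _ _ _ (cG0 t)).
  rewrite /wl_dist /wl_sqnorm /= HH big1 ?sqrtr0 // => t _; rewrite big1 // => c _; by rewrite subrr expr0n.
- set iG := sub_init (@gG m) (@gG m); set iH := sub_init (@gG m) (@gH m).
  set x : R := ((m.+1)%:R)%R.
  have CG t c := @wl_count_const _ _ _ _ t (cG1 t) c.
  have CH t c := @wl_count_const _ _ _ _ t (cH1 t) c.
  have Hne t : cc [:: true] t != cc [:: false] t by apply/eqP => /cc_inj.
  have U t : uniq (wl_index (@gG m) (@gH m) iG iH t) by apply: undup_uniq.
  have MT t : cc [:: true] t \in wl_index (@gG m) (@gH m) iG iH t.
    rewrite mem_undup mem_cat; apply/orP; left; apply/mapP; exists ord0; by rewrite ?mem_enum ?cG1.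
  have MF t : cc [:: false] t \in wl_index (@gG m) (@gH m) iG iH t.
    rewrite mem_undup mem_cat; apply/orP; right; apply/mapP; exists ord0; by rewrite ?mem_enum ?cH1.
  have SG t : (\sum_(c <- wl_index (@gG m) (@gH m) iG iH t) ((wl_count (@gG m) iG t c)%:R) ^+ 2 = x ^+ 2 :> R)%R.
    rewrite (@sum2 R _ (cc [:: true] t) (cc [:: false] t)) //.
      by rewrite !CG eqxx (negbTE (Hne t)) expr0n addr0.
    by move=> c ca cb; rewrite CG eq_sym (negbTE ca) expr0n.
  have SH t : (\sum_(c <- wl_index (@gG m) (@gH m) iG iH t) ((wl_count (@gH m) iH t c)%:R) ^+ 2 = x ^+ 2 :> R)%R.
    rewrite (@sum2 R _ (cc [:: true] t) (cc [:: false] t)) //.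
      by rewrite !CH eqxx eq_sym (negbTE (Hne t)) expr0n add0r.
    by move=> c ca cb; rewrite CH eq_sym (negbTE cb) expr0n.
  have NG : wl_sqnorm R (@gG m) (@gH m) iG iH (@gG m) iG T = (x ^+ 2 *+ T.+1)%R.
    by rewrite /wl_sqnorm (eq_bigr _ (fun (t : 'I_T.+1) _ => SG t)) sumr_const card_ord.
  have NH : wl_sqnorm R (@gG m) (@gH m) iG iH (@gH m) iH T = (x ^+ 2 *+ T.+1)%R.
    by rewrite /wl_sqnorm (eq_bigr _ (fun (t : 'I_T.+1) _ => SH t)) sumr_const card_ord.
  rewrite /wl_dist /= NG NH.
  set N := Num.sqrt (x ^+ 2 *+ T.+1)%R.
  have ST t : (\sum_(c <- wl_index (@gG m) (@gH m) iG iH t) ((wl_count (@gG m) iG t c)%:R / N - (wl_count (@gH m) iH t c)%:R / N) ^+ 2 = 2 * (x / N) ^+ 2 :> R)%R.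
    rewrite (@sum2 R _ (cc [:: true] t) (cc [:: false] t)) //.
      have Hn' : (cc [:: false] t == cc [:: true] t) = false by rewrite eq_sym (negbTE (Hne t)).
      rewrite !CG !CH !eqxx (negbTE (Hne t)) Hn' !mul0r subr0 sub0r sqrrN; ring.
    by move=> c ca cb; rewrite CG CH eq_sym (negbTE ca) eq_sym (negbTE cb) mul0r subrr expr0n.
  rewrite (eq_bigr _ (fun (t : 'I_T.+1) _ => ST t)) sumr_const card_ord.
  have xpos : (0 < x)%R by rewrite ltr0n.
  have N2 : (N ^+ 2 = x ^+ 2 *+ T.+1)%R by rewrite sqr_sqrtr // mulrn_wge0 // exprn_ge0 // ltW.
  have Npos : (N != 0)%R.
    apply/eqP => N0; move: N2; rewrite N0 expr0n /= => /esym/eqP.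
    by rewrite mulrn_eq0 /= expf_eq0 /= (negbTE (lt0r_neq0 xpos)).
  congr (Num.sqrt _).
  rewrite -mulr_natr expr_div_n N2 -mulr_natr.
  field. by rewrite !nat1r !pnatr_eq0.
Qed.
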